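(* Let $R$ be a unital ring and let $(P,Q,\psi)$ be a unital $R$-system satisfying Condition (FS'). Let $\mathcal{T}_{(P,Q,\psi)}=\bigoplus_i\mathcal{T}_i$ be its Toeplitz ring, and define $\epsilon_0=\iota_R(1_R)$ and, for $i>0$, $\epsilon_i=\pi_{\iota_Q^i,\iota_P^i}(\mathrm{id}_{Q^{\otimes i}})\in\mathcal{T}_i\mathcal{T}_{-i}$. Then for every $i\ge0$: $\epsilon_is=s$ for all $s\in\mathcal{T}_i$, and $t\epsilon_i=t$ for all $t\in\mathcal{T}_{-i}$. Consequently $\mathcal{T}_i\mathcal{T}_{-i}$ is a unital ideal of $\mathcal{T}_0$ with multiplicative identity $\epsilon_i$, for every $i\ge0$.
   Context: For additive subsets $X,Y$ of a ring, $XY$ is the additive subgroup generated by products. An $R$-system is a triple $(P,Q,\psi)$ with $P,Q$ $R$-bimodules and $\psi:P\otimes_RQ\to R$ an $R$-bimodule homomorphism; it is unital if $R$ is unital and $1_R$ acts as identity on both sides of $P$ and $Q$. Put $P^{\otimes0}=Q^{\otimes0}=R$, $\psi_0(r\otimes r')=rr'$, $\psi_1=\psi$, and for $n>1$: $Q^{\otimes n}=Q^{\otimes(n-1)}\otimes_RQ$, $P^{\otimes n}=P\otimes_RP^{\otimes(n-1)}$, $\psi_n((p_1\otimes p_2)\otimes(q_2\otimes q_1))=\psi(p_1\psi_{n-1}(p_2\otimes q_2)\otimes q_1)$; $(P^{\otimes n},Q^{\otimes n},\psi_n)$ is again an $R$-system. For an $R$-system $(P,Q,\psi)$ and $q\in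 Q,p\in P$ let $\theta_{q,p}(x)=q\psi(p\otimes x)$ ($x\in Q$), $\theta_{p,q}(y)=\psi(y\otimes q)p$ ($y\in P$); $\mathcal{F}_P(Q)$, $\mathcal{F}_Q(P)$ are the additive groups generated by these maps. Condition (FS'): there exist $\Theta\in\mathcal{F}_P(Q)$, $\Phi\in\mathcal{F}_Q(P)$ with $\Theta(q)=q$, $\Phi(p)=p$ for all $q,p$. If $(P,Q,\psi)$ satisfies (FS'), so does each $(P^{\otimes n},Q^{\otimes n},\psi_n)$, and $\mathrm{id}_{Q^{\otimes n}}\in\mathcal{F}_{P^{\otimes n}}(Q^{\otimes n})$ in the unital case. A covariant representation of $(P,Q,\psi)$ is a tuple $(S,T,\sigma,B)$ with $B$ a ring, $S:P\to B$, $T:Q\to B$ additive maps, $\sigma:R\to B$ a ring homomorphism, with $S(pr)=S(p)\sigma(r)$, $S(rp)=\sigma(r)S(p)$, $T(qr)=T(q)\sigma(r)$, $T(rq)=\sigma(r)T(q)$, $\sigma(\psi(p\otimes q))=S(p)T(q)$; then with $S^n(p_1\otimes\cdots\otimes p_n)=S(p_1)\cdots S(p_n)$, $T^n(q_1\otimes\cdots\otimes q_n)=T(q_1)\cdots T(q_n)$, $(S^n,T^n,\sigma,B)$ is a covariant representation of $(P^{\otimes n},Q^{\otimes n},\psi_n)$, and there is a unique ring homomorphism $\pi_{T^n,S^n}:\mathcal{F}_{P^{\otimes n}}(Q^{\otimes n})\to B$ with $\pi_{T^n,S^n}(\theta_{q,p})=T^n(q)S^n(p)$. The Toeplitz representation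 $(\iota_P,\iota_Q,\iota_R,\mathcal{T}_{(P,Q,\psi)})$ is the universal covariant representation; its $\mathbb{Z}$-grading is $\mathcal{T}_i$ = additive group generated by the elements $\iota_Q^m(q)\iota_P^n(p)$ and $\iota_R(r)\iota_Q^m(q)\iota_P^n(p)$ for $q\in Q^{\otimes m}$, $p\in P^{\otimes n}$, $m-n=i$ (with $\iota^0=\iota_R$). *)

(* Defs.v *)
From HB Require Import structures.
From mathcomp Require Import all_boot all_order all_algebra.
Set Implicit Arguments. Unset Strict Implicit. Unset Printing Implicit Defensive.
Import GRing.Theory.
Local Open Scope ring_scope.

Record bimod (R : pzRingType) := Bimod {
  bm_car :> zmodType;
  bm_l : R -> bm_car -> bm_car;
  bm_r : bm_car -> R -> bm_car;
  bm_lD : forall r (x y : bm_car), bm_l r (x + y) = bm_l r x + bm_l r y;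
  bm_Dl : forall r s (x : bm_car), bm_l (r + s) x = bm_l r x + bm_l s x;
  bm_lM : forall r s (x : bm_car), bm_l (r * s) x = bm_l r (bm_l s x);
  bm_rD : forall r (x y : bm_car), bm_r (x + y) r = bm_r x r + bm_r y r;
  bm_Dr : forall r s (x : bm_car), bm_r x (r + s) = bm_r x r + bm_r x s;
  bm_rM : forall r s (x : bm_car), bm_r x (r * s) = bm_r (bm_r x r) s;
  bm_lr : forall r s (x : bm_car), bm_l r (bm_r x s) = bm_r (bm_l r x) s }.

Section Tensors.
Variable R : pzRingType.

Definition unital_bimod (M : bimod R) :=
  (forall x : M, bm_l 1 x = x) /\ (forall x : M, bm_r x 1 = x).

(* Formal Z-linear combinations of elementary tensors x_1 (x) ... (x) x_n,
   an elementary tensor being represented by the sequence [:: x_1; ...; x_n]. *)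
Definition fsum (M : bimod R) (A : zmodType) (f : seq M -> A)
  (u : seq (int * seq M)) : A := \sum_(c <- u) f c.2 *~ c.1.

Definition deg (M : bimod R) (n : nat) (u : seq (int * seq M)) :=
  forall c, c \in u -> size c.2 = n.

Definition multibal (M : bimod R) (n : nat) (A : zmodType) (f : seq M -> A) :=
  (forall (xs : seq M) j (a b : M), size xs = n -> (j < n)%N ->
     f (set_nth 0 xs j (a + b)) = f (set_nth 0 xs j a) + f (set_nth 0 xs j b)) /\
  (forall (xs : seq M) j r, size xs = n -> (j.+1 < n)%N ->
     f (set_nth 0 xs j (bm_r (nth 0 xs j) r))
     = f (set_nth 0 xs j.+1 (bm_l r (nth 0 xs j.+1)))).

(* Equality in the tensor power M^{(x) n} = M (x)_R ... (x)_R M (n >= 1) of the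
   elements represented by the formal combinations u and v (universal property
   of the tensor product). *)
Definition teq (M : bimod R) (n : nat) (u v : seq (int * seq M)) :=
  forall (A : zmodType) (f : seq M -> A), multibal n f -> fsum f u = fsum f v.

Definition ract_seq (M : bimod R) (xs : seq M) (r : R) : seq M :=
  if xs is y :: ys then rcons (belast y ys) (bm_r (last y ys) r) else [::].

Variables P Q : bimod R.
Variable psi : P -> Q -> R.

(* psi : P (x)_R Q -> R is an R-bimodule map (given on elementary tensors) *)
Definition is_system :=
  [/\ forall (p p' : P) (q : Q), psi (p + p') q = psi p q + psi p' q,
      forall (p : P) (q q' : Q), psi p (q + q') = psi p q + psi p q',
      forall (p : P) r (q : Q), psi (bm_r p r) q = psi p (bm_l r q),
      forall r (p : P) (q : Q), psi (bm_l r p) q = r * psi p q &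
      forall (p : P) (q : Q) r, psi p (bm_r q r) = psi p q * r].

(* Condition (FS'): the identities of Q and P are Z-combinations of the maps
   theta_{q,p} : x |-> q psi(p (x) x) and theta_{p,q} : y |-> psi(y (x) q) p. *)
Definition FS' :=
  (exists l : seq (int * Q * P),
     forall x : Q, \sum_(k <- l) bm_r k.1.2 (psi k.2 x) *~ k.1.1 = x) /\
  (exists l : seq (int * P * Q),
     forall y : P, \sum_(k <- l) bm_l (psi y k.2) k.1.2 *~ k.1.1 = y).

(* psi_n on elementary tensors p_1(x)..(x)p_n and x_1(x)..(x)x_n:
   psi_n = psi(p_1 psi_{n-1}(p_2..p_n, x_1..x_{n-1}) (x) x_n). *)
Fixpoint psi_aux (ps : seq P) (rxs : seq Q) : R :=
  match ps, rxs with
  | [:: p], [:: x] => psi p x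
  | p :: ps', x :: rxs' => psi (bm_r p (psi_aux ps' rxs')) x
  | _, _ => 0
  end.
Definition psi_n (ps : seq P) (xs : seq Q) : R := psi_aux ps (rev xs).

Definition psiF (p : seq (int * seq P)) (x : seq (int * seq Q)) : R :=
  \sum_(a <- p) \sum_(b <- x) psi_n a.2 b.2 *~ (a.1 * b.1).

Definition thetaF (q : seq (int * seq Q)) (p : seq (int * seq P))
  (x : seq (int * seq Q)) : seq (int * seq Q) :=
  [seq (c.1, ract_seq c.2 (psiF p x)) | c <- q].

Definition famF (fam : seq (int * seq (int * seq Q) * seq (int * seq P)))
  (x : seq (int * seq Q)) : seq (int * seq Q) :=
  flatten [seq [seq (k.1.1 * c.1, c.2) | c <- thetaF k.1.2 k.2 x] | k <- fam].

(* Covariant representations and ring homomorphisms (not necessarily unital). *)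
Definition ringhom (C D : pzRingType) (f : C -> D) :=
  (forall x y, f (x - y) = f x - f y) /\ (forall x y, f (x * y) = f x * f y).

Definition covrep (C : pzRingType) (sg : R -> C) (S : P -> C) (T : Q -> C) :=
  [/\ ringhom sg,
      (forall p p' : P, S (p - p') = S p - S p') /\ (forall q q' : Q, T (q - q') = T q - T q'),
      (forall (p : P) r, S (bm_r p r) = S p * sg r) /\ (forall r (p : P), S (bm_l r p) = sg r * S p),
      (forall (q : Q) r, T (bm_r q r) = T q * sg r) /\ (forall r (q : Q), T (bm_l r q) = sg r * T q) &
      forall (p : P) (q : Q), sg (psi p q) = S p * T q].

(* (sig, S, T, B) is the universal covariant representation (Toeplitz ring). *)
Definition toeplitz (B : pzRingType) (sig : R -> B) (S : P -> B) (T : Q -> B) :=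
  covrep sig S T /\
  forall (C : pzRingType) (sg : R -> C) (S' : P -> C) (T' : Q -> C),
    covrep sg S' T' ->
    (exists phi : B -> C, [/\ ringhom phi, forall r, phi (sig r) = sg r,
        forall p, phi (S p) = S' p & forall q, phi (T q) = T' q]) /\
    (forall phi1 phi2 : B -> C,
        [/\ ringhom phi1, forall r, phi1 (sig r) = sg r,
            forall p, phi1 (S p) = S' p & forall q, phi1 (T q) = T' q] ->
        [/\ ringhom phi2, forall r, phi2 (sig r) = sg r,
            forall p, phi2 (S p) = S' p & forall q, phi2 (T q) = T' q] ->
        forall b, phi1 b = phi2 b).

Variable B : pzRingType.
Variable sig : R -> B.
Variable S : P -> B.
Variable T : Q -> B.

Definition TQ (u : seq (int * seq Q)) : B := \sum_(c <- u) (\prod_(x <- c.2) T x) *~ c.1.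
Definition SP (u : seq (int * seq P)) : B := \sum_(c <- u) (\prod_(y <- c.2) S y) *~ c.1.

(* e = epsilon_i: for i = 0, sig 1; for i > 0, e = pi(id_{Q^{(x) i}}) computed
   from any expression id = sum_k n_k theta_{q_k,p_k} with q_k in Q^{(x) i},
   p_k in P^{(x) i}. *)
Definition is_eps (i : nat) (e : B) :=
  if i is 0 then e = sig 1 else
  exists fam : seq (int * seq (int * seq Q) * seq (int * seq P)),
    [/\ forall k, k \in fam -> deg i k.1.2 /\ deg i k.2,
        forall x, deg i x -> teq i (famF fam x) x &
        e = \sum_(k <- fam) (TQ k.1.2 * SP k.2) *~ k.1.1].

(* c is iota_Q^m(q) for some q in Q^{(x) m} (Q^{(x) 0} = R, iota^0 = sig) *)
Definition imQ (m : nat) (c : B) :=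
  (m = 0%N /\ exists r, c = sig r) \/ ((0 < m)%N /\ exists u, deg m u /\ c = TQ u).
Definition imP (n : nat) (d : B) :=
  (n = 0%N /\ exists r, d = sig r) \/ ((0 < n)%N /\ exists u, deg n u /\ d = SP u).

(* generators of the graded piece T_i *)
Definition gen (i : int) (b : B) :=
  exists (m n : nat) (c d : B), [/\ m%:Z - n%:Z = i, imQ m c, imP n d &
     (b = c * d \/ exists r, b = sig r * c * d)].

Definition span (G : B -> Prop) (x : B) :=
  exists l : seq (int * B), (forall k, k \in l -> G k.2) /\ x = \sum_(k <- l) k.2 *~ k.1.

Definition inT (i : int) := span (gen i).
Definition prodT (i : int) :=
  span (fun b => exists s t, [/\ inT i s, inT (- i) t & b = s * t]).

End Tensors.

(* Main.v *)
Require Import Defs.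
From HB Require Import structures.
From mathcomp Require Import all_boot all_order all_algebra.
From mathcomp Require Import zify.
Set Implicit Arguments. Unset Strict Implicit.
Import GRing.Theory.
Local Open Scope ring_scope.
Local Notation span := Defs.span.

Lemma addf_props (U V : zmodType) (h : U -> V) :
  (forall a b, h (a + b) = h a + h b) ->
  [/\ h 0 = 0, forall a, h (- a) = - h a & forall a z, h (a *~ z) = h a *~ z].
Proof.
move=> H.
have h0 : h 0 = 0.
  by apply: (addIr (h 0)); rewrite -H !add0r.
have hN : forall a, h (- a) = - h a.
  by move=> a; apply: (addrI (h a)); rewrite -H !subrr.
have hn : forall a n, h (a *+ n) = h a *+ n.
  by move=> a; elim=> [|n IH]; rewrite ?mulr0n // !mulrS H IH.
split=> // a [n|n]; first by rewrite -!pmulrn hn.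
by rewrite !NegzE !mulrNz hN -!pmulrn hn.
Qed.

Lemma addf_lin (U V : zmodType) (h : U -> V) :
  (forall a b, h (a + b) = h a + h b) ->
  forall (I : Type) (l : seq I) (g : I -> U) (z : I -> int),
  h (\sum_(k <- l) g k *~ z k) = \sum_(k <- l) h (g k) *~ z k.
Proof.
move=> H; have [h0 hN hz] := addf_props H.
move=> I; elim=> [|k l IH] g z; first by rewrite !big_nil.
by rewrite !big_cons H hz IH.
Qed.

Lemma subf_add (U V : zmodType) (h : U -> V) :
  (forall a b, h (a - b) = h a - h b) -> forall a b, h (a + b) = h a + h b.
Proof.
move=> H.
have h0 : h 0 = 0 by rewrite -(subrr 0) H subrr.
have hN : forall a, h (- a) = - h a by move=> a; rewrite -sub0r H h0 sub0r.
by move=> a b; have := H a (- b); rewrite opprK => ->; rewrite hN opprK.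
Qed.

Section Span.
Variable B : pzRingType.


Lemma spanB_gen (G : B -> Prop) x : G x -> span G x.
Proof. by move=> Gx; exists [:: (1%Z, x)]; split; [move=> k; rewrite inE => /eqP -> | rewrite big_seq1]. Qed.

Lemma spanB0 (G : B -> Prop) : span G 0.
Proof. by exists [::]; split=> //; rewrite big_nil. Qed.

Lemma spanB_add (G : B -> Prop) x y : span G x -> span G y -> span G (x + y).
Proof.
move=> [l1 [H1 ->]] [l2 [H2 ->]]; exists (l1 ++ l2); split; last by rewrite big_cat.
by move=> k; rewrite mem_cat => /orP [/H1|/H2].
Qed.

Lemma spanB_z (G : B -> Prop) x z : span G x -> span G (x *~ z).
Proof.
move=> [l [H1 ->]]; exists [seq (k.1 * z, k.2) | k <- l]; split.
  by move=> k /mapP [k' /H1 Hk ->].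
by rewrite big_map mulrz_suml; apply: eq_bigr => k _; rewrite mulrzA.
Qed.

Lemma spanB_sub (G : B -> Prop) x y : span G x -> span G y -> span G (x - y).
Proof. by move=> Hx Hy; apply: spanB_add => //; rewrite -mulrN1z; apply: spanB_z. Qed.

Lemma spanB_sum (G : B -> Prop) (I : eqType) (l : seq I) (g : I -> B) (z : I -> int) :
  (forall k, k \in l -> span G (g k)) -> span G (\sum_(k <- l) g k *~ z k).
Proof.
elim: l => [|k l IH] H; first by rewrite big_nil; apply: spanB0.
rewrite big_cons; apply: spanB_add; first by apply: spanB_z; apply: H; rewrite inE eqxx.
by apply: IH => k' Hk'; apply: H; rewrite inE Hk' orbT.
Qed.

Lemma spanB_span (G1 G2 : B -> Prop) x : (forall g, G1 g -> span G2 g) -> span G1 x -> span G2 x.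
Proof. by move=> H [l [Hl ->]]; apply: spanB_sum => k /Hl; apply: H. Qed.

Lemma spanB_mul (G1 G2 G3 : B -> Prop) x y :
  (forall g h, G1 g -> G2 h -> span G3 (g * h)) -> span G1 x -> span G2 y -> span G3 (x * y).
Proof.
move=> H [l1 [H1 ->]] [l2 [H2 ->]].
rewrite mulr_suml; under eq_bigr => k _ do rewrite mulrzAl.
apply: spanB_sum => k Hk.
rewrite mulr_sumr; under eq_bigr => k' _ do rewrite mulrzAr.
apply: spanB_sum => k' Hk'.
by apply: H; [apply: H1 | apply: H2].
Qed.

Lemma spanB_lid (G : B -> Prop) e x : (forall g, G g -> e * g = g) -> span G x -> e * x = x.
Proof.
move=> H [l [Hl ->]]; rewrite mulr_sumr; apply: eq_big_seq => k Hk.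
by rewrite mulrzAr H //; apply: Hl.
Qed.

Lemma spanB_rid (G : B -> Prop) e x : (forall g, G g -> g * e = g) -> span G x -> x * e = x.
Proof.
move=> H [l [Hl ->]]; rewrite mulr_suml; apply: eq_big_seq => k Hk.
by rewrite mulrzAl H //; apply: Hl.
Qed.
End Span.

Lemma set_nth_rcons_lt (X : Type) (x0 : X) s y j a :
  (j < size s)%N -> set_nth x0 (rcons s y) j a = rcons (set_nth x0 s j a) y.
Proof. by elim: s j => [|z s IH] [|j] //= H; rewrite IH. Qed.

Lemma set_nth_rcons_eq (X : Type) (x0 : X) s y a :
  set_nth x0 (rcons s y) (size s) a = rcons s a.
Proof. by elim: s => [|z s IH] //=; rewrite IH. Qed.

Lemma ract_rcons (R : pzRingType) (M : bimod R) (s : seq M) y r :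
  ract_seq (rcons s y) r = rcons s (bm_r y r).
Proof. by case: s => [|z s] //=; rewrite belast_rcons last_rcons. Qed.

Lemma ract_set_nth (R : pzRingType) (M : bimod R) (xs : seq M) r : xs != [::] ->
  ract_seq xs r = set_nth 0 xs (size xs).-1 (bm_r (nth 0 xs (size xs).-1) r).
Proof.
case/lastP: xs => [//|s z] _.
by rewrite ract_rcons size_rcons /= nth_rcons ltnn eqxx set_nth_rcons_eq.
Qed.

Lemma size_ract (R : pzRingType) (M : bimod R) (xs : seq M) r :
  size (ract_seq xs r) = size xs.
Proof. by case/lastP: xs => [//|s z]; rewrite ract_rcons !size_rcons. Qed.

Section Tens.
Variable R : pzRingType.
Variables P Q : bimod R.
Variable psi : P -> Q -> R.
Hypothesis Hsys : is_system psi.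
Variable l : seq (int * Q * P).
Hypothesis Hl : forall x : Q, \sum_(k <- l) bm_r k.1.2 (psi k.2 x) *~ k.1.1 = x.

Lemma mb_slot (A : zmodType) n (f : seq Q -> A) xs j :
  multibal n f -> size xs = n -> (j < n)%N ->
  forall a b, f (set_nth 0 xs j (a + b)) = f (set_nth 0 xs j a) + f (set_nth 0 xs j b).
Proof. by move=> [H1 _] Hs Hj a b; apply: H1. Qed.

Lemma mb_rcons (A : zmodType) n (f : seq Q -> A) y :
  multibal n.+1 f -> multibal n (fun zs => f (rcons zs y)).
Proof.
move=> [H1 H2]; split.
  move=> xs j a b Hs Hj /=; rewrite -!set_nth_rcons_lt ?Hs //.
  by apply: H1; rewrite ?size_rcons ?Hs // ltnS ltnW.
move=> xs j r Hs Hj /=.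
have := H2 (rcons xs y) j r; rewrite size_rcons Hs => /(_ erefl).
rewrite !nth_rcons Hs Hj (ltnW Hj) !set_nth_rcons_lt ?Hs ?Hj ?(ltnW Hj) //.
by apply; rewrite ltnS ltnW.
Qed.

Fixpoint Lq (i : nat) : seq (int * seq Q * seq P) :=
  match i with
  | 0 => [seq (k.1.1, [:: k.1.2], [:: k.2]) | k <- l]
  | i'.+1 => [seq (t.1.1 * k.1.1, rcons t.1.2 k.1.2, k.2 :: t.2) | t <- Lq i', k <- l]
  end.

Lemma Lq_size i t : t \in Lq i -> size t.1.2 = i.+1 /\ size t.2 = i.+1.
Proof.
elim: i t => [|i IH] t /=.
  by case/mapP => k _ ->.
case/allpairsP => [[t' k] [/= /IH [H1 H2] _ ->]] /=.
by rewrite size_rcons H1 H2.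
Qed.

Lemma psi_n_step p pK (xs : seq Q) y : pK != [::] -> xs != [::] ->
  psi_n psi (p :: pK) (rcons xs y) = psi (bm_r p (psi_n psi pK xs)) y.
Proof.
rewrite /psi_n rev_rcons; case: pK => [//|p' pK] _ Hx.
by case Hr: (rev xs) => [|z zs] //; move: Hx; rewrite -(revK xs) Hr.
Qed.

Lemma KE i (A : zmodType) (f : seq Q -> A) (xs : seq Q) :
  multibal i.+1 f -> size xs = i.+1 ->
  \sum_(t <- Lq i) f (ract_seq t.1.2 (psi_n psi t.2 xs)) *~ t.1.1 = f xs.
Proof.
case: Hsys => _ _ Hrl _ _.
elim: i A f xs => [|i IH] A f xs Hf Hs.
  case: xs Hs => [|x [|//]] // _.
  rewrite big_map /=.
  have Ha : forall a b, f [:: a + b] = f [:: a] + f [:: b].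
    by move=> a b; have /= := mb_slot (xs := [:: x]) (j := 0%N) Hf erefl (ltn0Sn 0) a b.
  transitivity (f [:: \sum_(k <- l) bm_r k.1.2 (psi k.2 x) *~ k.1.1]); last by rewrite Hl.
  by rewrite (addf_lin Ha).
case/lastP: xs Hs => [//|xs y]; rewrite size_rcons => -[Hs].
rewrite big_allpairs_dep /=.
have Hf' := mb_rcons y Hf.
rewrite -(IH _ _ xs Hf' Hs).
apply: eq_big_seq => t Ht.
have [Hq Hp] := Lq_size Ht.
have Ha : forall a b, f (rcons t.1.2 (a + b)) = f (rcons t.1.2 a) + f (rcons t.1.2 b).
  move=> a b.
  have Hsz : size (rcons t.1.2 y) = i.+2 by rewrite size_rcons Hq.
  have Hj : (size t.1.2 < i.+2)%N by rewrite Hq.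
  by have := mb_slot Hf Hsz Hj a b; rewrite !set_nth_rcons_eq.
transitivity ((\sum_(k <- l) f (rcons t.1.2 (bm_r k.1.2
     (psi k.2 (bm_l (psi_n psi t.2 xs) y)))) *~ k.1.1) *~ t.1.1).
  rewrite mulrz_suml; apply: eq_bigr => k _.
  rewrite ract_rcons psi_n_step -?size_eq0 ?Hp ?Hs // Hrl.
  by rewrite mulrzA_C.
transitivity (f (rcons t.1.2 (\sum_(k <- l) bm_r k.1.2
     (psi k.2 (bm_l (psi_n psi t.2 xs) y)) *~ k.1.1)) *~ t.1.1).
  by rewrite (addf_lin Ha).
rewrite Hl /=; congr (_ *~ _).
case: Hf => _ H2.
have := H2 (rcons t.1.2 y) i (psi_n psi t.2 xs).
rewrite size_rcons Hq => /(_ erefl (ltnSn _)).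
rewrite !nth_rcons Hq ltnn eqxx ltnSn set_nth_rcons_lt ?Hq //.
rewrite -Hq set_nth_rcons_eq => <-.
by rewrite (ract_set_nth _ (xs := t.1.2)) -?size_eq0 ?Hq.
Qed.

Definition famL i := [seq (t.1.1, [:: (1%Z, t.1.2)], [:: (1%Z, t.2)]) | t <- Lq i].

Lemma fam_teq i x : deg i.+1 x -> teq i.+1 (famF psi (famL i) x) x.
Proof.
move=> Hx A f Hf.
rewrite /fsum /famF big_flatten /= big_map.
transitivity (\sum_(t <- Lq i)
   f (ract_seq t.1.2 (\sum_(b <- x) psi_n psi t.2 b.2 *~ b.1)) *~ t.1.1).
  rewrite big_map; apply: eq_bigr => t _ /=.
  rewrite big_seq1 /= mulr1 /psiF big_seq1 /=.
  by under eq_bigr do rewrite mul1r.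
transitivity (\sum_(t <- Lq i)
   (\sum_(b <- x) f (ract_seq t.1.2 (psi_n psi t.2 b.2)) *~ b.1) *~ t.1.1).
  apply: eq_big_seq => t Ht; congr (_ *~ _).
  have [Hq Hp] := Lq_size Ht.
  have Ha : forall r s, f (ract_seq t.1.2 (r + s)) = f (ract_seq t.1.2 r) + f (ract_seq t.1.2 s).
    move=> r s; rewrite !ract_set_nth -?size_eq0 ?Hq // bm_Dr.
    exact: (mb_slot Hf Hq (ltnSn i)).
  by rewrite (addf_lin Ha).
rewrite (eq_bigr (fun t => \sum_(b <- x)
   f (ract_seq t.1.2 (psi_n psi t.2 b.2)) *~ b.1 *~ t.1.1)); last first.
  by move=> t _; rewrite mulrz_suml.
rewrite exchange_big /=; apply: eq_big_seq => b Hb.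
under eq_bigr do rewrite mulrzAC.
by rewrite -mulrz_suml KE // Hx.
Qed.

End Tens.

Definition lact_seq (R : pzRingType) (M : bimod R) (r : R) (xs : seq M) :=
  if xs is y :: ys then bm_l r y :: ys else [::].

Lemma size_lact (R : pzRingType) (M : bimod R) r (xs : seq M) : size (lact_seq r xs) = size xs.
Proof. by case: xs. Qed.

Section Rep.
Variable R : pzRingType.
Variables P Q : bimod R.
Variable psi : P -> Q -> R.
Variable B : pzRingType.
Variable sig : R -> B.
Variable S : P -> B.
Variable T : Q -> B.
Hypothesis Hcov : covrep psi sig S T.
Hypothesis HP : unital_bimod P.
Hypothesis HQ : unital_bimod Q.

Lemma sigB x y : sig (x - y) = sig x - sig y. Proof. by case: Hcov => [[]]. Qed.
Lemma sigM x y : sig (x * y) = sig x * sig y. Proof. by case: Hcov => [[]]. Qed.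
Lemma SB p p' : S (p - p') = S p - S p'. Proof. by case: Hcov => _ [H _]. Qed.
Lemma TB q q' : T (q - q') = T q - T q'. Proof. by case: Hcov => _ [_ H]. Qed.
Lemma Sr p r : S (bm_r p r) = S p * sig r. Proof. by case: Hcov => _ _ [H _]. Qed.
Lemma Sl r p : S (bm_l r p) = sig r * S p. Proof. by case: Hcov => _ _ [_ H]. Qed.
Lemma Tr q r : T (bm_r q r) = T q * sig r. Proof. by case: Hcov => _ _ _ [H _]. Qed.
Lemma Tl r q : T (bm_l r q) = sig r * T q. Proof. by case: Hcov => _ _ _ [_ H]. Qed.
Lemma Spsi p q : sig (psi p q) = S p * T q. Proof. by case: Hcov. Qed.
Definition sigD := subf_add sigB.
Definition SD := subf_add SB.
Definition TD := subf_add TB.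

Definition PT (qs : seq Q) := \prod_(q <- qs) T q.
Definition PS (ps : seq P) := \prod_(p <- ps) S p.

Lemma PT_ract qs r : qs != [::] -> PT (ract_seq qs r) = PT qs * sig r.
Proof. by case/lastP: qs => [//|s z] _; rewrite ract_rcons /PT !big_rcons /= Tr mulrA. Qed.
Lemma PS_ract ps r : ps != [::] -> PS (ract_seq ps r) = PS ps * sig r.
Proof. by case/lastP: ps => [//|s z] _; rewrite ract_rcons /PS !big_rcons /= Sr mulrA. Qed.
Lemma PT_lact r qs : qs != [::] -> PT (lact_seq r qs) = sig r * PT qs.
Proof. by case: qs => [//|z s] _; rewrite /PT /= !big_cons Tl mulrA. Qed.
Lemma PS_lact r ps : ps != [::] -> PS (lact_seq r ps) = sig r * PS ps.
Proof. by case: ps => [//|z s] _; rewrite /PS /= !big_cons Sl mulrA. Qed.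
Lemma PT_cat a b : PT (a ++ b) = PT a * PT b. Proof. by rewrite /PT big_cat. Qed.
Lemma PS_cat a b : PS (a ++ b) = PS a * PS b. Proof. by rewrite /PS big_cat. Qed.
Lemma PT0 : PT [::] = 1. Proof. by rewrite /PT big_nil. Qed.
Lemma PS0 : PS [::] = 1. Proof. by rewrite /PS big_nil. Qed.

Lemma contract n : forall ps qs, size ps = n -> ps != [::] -> qs != [::] ->
  (exists r, size ps = size qs /\ PS ps * PT qs = sig r) \/
  (exists ps', [/\ ps' != [::], size ps = (size ps' + size qs)%N & PS ps * PT qs = PS ps']) \/
  (exists qs', [/\ qs' != [::], size qs = (size ps + size qs')%N & PS ps * PT qs = PT qs']).
Proof.
elim: n => [|n IH] ps qs Hs Hp Hq; first by move: Hp; rewrite -size_eq0 Hs.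
case/lastP: ps Hs Hp => [//|ps0 p]; rewrite size_rcons => -[Hs] _.
case: qs Hq => [//|q qs0] _.
have E : PS (rcons ps0 p) * PT (q :: qs0) = PS ps0 * sig (psi p q) * PT qs0.
  by rewrite /PS /PT big_rcons big_cons /= Spsi !mulrA.
rewrite E.
case: ps0 Hs E => [|p0 ps1] Hs E; case: qs0 E => [|q0 qs1] E.
- by left; exists (psi p q); split=> //; rewrite PS0 PT0 mul1r mulr1.
- right; right; exists (lact_seq (psi p q) (q0 :: qs1)); split=> //.
  by rewrite PS0 mul1r PT_lact.
- right; left; exists (ract_seq (p0 :: ps1) (psi p q)); split=> //.
    by rewrite -size_eq0 size_ract.
  by rewrite size_ract /= addn1.
  by rewrite PT0 mulr1 PS_ract.
rewrite -PS_ract //.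
have Hs' : size (ract_seq (p0 :: ps1) (psi p q)) = n by rewrite size_ract.
have Hne : ract_seq (p0 :: ps1) (psi p q) != [::] by rewrite -size_eq0 size_ract.
case: (IH _ (q0 :: qs1) Hs' Hne isT) => [[r [H1 H2]]|[[ps' [H1 H2 H3]]|[qs' [H1 H2 H3]]]].
- left; exists r; split => //; move: H1; rewrite size_ract /= => ->; by [].
- right; left; exists ps'; split=> //; move: H2; rewrite size_ract /= => ->/=; lia.
- right; right; exists qs'; split=> //; move: H2; rewrite size_ract /= => ->/=; lia.
Qed.


Definition NF (a : int) (b : B) :=
  (a = 0 /\ exists r, b = sig r) \/
  exists qs ps, [/\ (qs != [::]) || (ps != [::]), (size qs)%:Z - (size ps)%:Z = a & b = PT qs * PS ps].

Lemma NF_of a qs ps v : (qs != [::]) || (ps != [::]) -> (size qs)%:Z - (size ps)%:Z = a ->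
  v = PT qs * PS ps -> NF a v.
Proof. by move=> H1 H2 H3; right; exists qs, ps. Qed.

Lemma NF_sig r : NF 0 (sig r).
Proof. by left; split=> //; exists r. Qed.

Lemma ne_cat (X : eqType) (a b : seq X) : (a ++ b != [::]) = (a != [::]) || (b != [::]).
Proof. by case: a. Qed.

Lemma absorbL r qs ps : (qs != [::]) || (ps != [::]) ->
  NF ((size qs)%:Z - (size ps)%:Z) (sig r * (PT qs * PS ps)).
Proof.
case: qs => [|q qs] /= Hne.
  apply: (NF_of (qs := [::]) (ps := lact_seq r ps)) => //.
    by rewrite /= -size_eq0 size_lact size_eq0.
    by rewrite size_lact.
  by rewrite PT0 !mul1r PS_lact.
apply: (NF_of (qs := lact_seq r (q :: qs)) (ps := ps)) => //.
by rewrite PT_lact // mulrA.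
Qed.

Lemma absorbR r qs ps : (qs != [::]) || (ps != [::]) ->
  NF ((size qs)%:Z - (size ps)%:Z) ((PT qs * PS ps) * sig r).
Proof.
move=> Hne; case Hp: (ps != [::]).
  apply: (NF_of (qs := qs) (ps := ract_seq ps r)).
  - by rewrite -(size_eq0 (ract_seq _ _)) size_ract size_eq0 Hp orbT.
  - by rewrite size_ract.
  by rewrite PS_ract // mulrA.
move/negbFE/eqP: Hp => Hp; subst ps; rewrite orbF in Hne.
apply: (NF_of (qs := ract_seq qs r) (ps := [::])) => //.
- by rewrite orbF -size_eq0 size_ract size_eq0.
- by rewrite size_ract.
by rewrite PS0 !mulr1 PT_ract.
Qed.

Lemma NFmul a b x y : NF a x -> NF b y -> NF (a + b) (x * y).
Proof.
case=> [[-> [r ->]]|[qs [ps [H1 H2 ->]]]];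
  case=> [[-> [r' ->]]|[qs' [ps' [H1' H2' ->]]]].
- by rewrite addr0 -sigM; apply: NF_sig.
- by rewrite add0r -H2'; apply: absorbL.
- by rewrite addr0 -H2; apply: absorbR.
have E : PT qs * PS ps * (PT qs' * PS ps') = PT qs * (PS ps * PT qs') * PS ps'.
  by rewrite !mulrA.
rewrite E.
case Hps: (ps != [::]); last first.
  move/negbFE/eqP: Hps => Hps; subst ps.
  apply: (NF_of (qs := qs ++ qs') (ps := ps')).
  - by rewrite ne_cat; case/orP: H1' => ->; rewrite ?orbT.
  - by rewrite size_cat /= -H2 -H2'/=; lia.
  by rewrite PS0 mul1r PT_cat.
case Hqs': (qs' != [::]); last first.
  move/negbFE/eqP: Hqs' => Hqs'; subst qs'.
  apply: (NF_of (qs := qs) (ps := ps ++ ps')).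
  - by rewrite ne_cat; case/orP: H1 => ->; rewrite ?orbT.
  - by rewrite size_cat /= -H2 -H2'/=; lia.
  by rewrite PT0 mulr1 PS_cat mulrA.
case: (contract (erefl (size ps)) Hps Hqs') =>
  [[r [Hsz ->]]|[[ps'' [Hne Hsz ->]]|[qs'' [Hne Hsz ->]]]].
- case Hq: (qs != [::]).
    apply: (NF_of (qs := ract_seq qs r) (ps := ps')).
    + by rewrite -size_eq0 size_ract size_eq0 Hq.
    + by rewrite size_ract -H2 -H2' Hsz/=; lia.
    by rewrite PT_ract.
  move/negbFE/eqP: Hq => Hq; subst qs.
  rewrite PT0 mul1r.
  case Hp': (ps' != [::]).
    apply: (NF_of (qs := [::]) (ps := lact_seq r ps')).
    + by rewrite /= -size_eq0 size_lact size_eq0 Hp'.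
    + by rewrite size_lact -H2 -H2' Hsz /=/=; lia.
    by rewrite PT0 mul1r PS_lact.
  move/negbFE/eqP: Hp' => Hp'; subst ps'.
  have -> : a + b = 0 by rewrite -H2 -H2' Hsz /=; lia.
  by rewrite PS0 mulr1; apply: NF_sig.
- apply: (NF_of (qs := qs) (ps := ps'' ++ ps')).
  + by rewrite !ne_cat Hne !orbT.
  + by rewrite size_cat -H2 -H2' Hsz/=; lia.
  by rewrite PS_cat mulrA.
apply: (NF_of (qs := qs ++ qs'') (ps := ps')).
+ by rewrite !ne_cat Hne !orbT.
+ by rewrite size_cat -H2 -H2' Hsz/=; lia.
by rewrite PT_cat.
Qed.



Lemma PT_sig1 qs : qs != [::] -> PT qs * sig 1 = PT qs.
Proof. by case/lastP: qs => [//|s z] Hne; have := @PT_ract (rcons s z) 1 Hne; rewrite ract_rcons (proj2 HQ) => <-. Qed.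
Lemma PS_sig1 ps : ps != [::] -> PS ps * sig 1 = PS ps.
Proof. by case/lastP: ps => [//|s z] Hne; have := @PS_ract (rcons s z) 1 Hne; rewrite ract_rcons (proj2 HP) => <-. Qed.
Lemma sig1_PT qs : qs != [::] -> sig 1 * PT qs = PT qs.
Proof. by case: qs => [//|z s] _; have := @PT_lact 1 (z :: s) isT; rewrite /= (proj1 HQ) => <-. Qed.
Lemma sig1_PS ps : ps != [::] -> sig 1 * PS ps = PS ps.
Proof. by case: ps => [//|z s] _; have := @PS_lact 1 (z :: s) isT; rewrite /= (proj1 HP) => <-. Qed.

Lemma NF_gen a b : NF a b -> gen sig S T a b.
Proof.
case=> [[-> [r ->]]|[qs [ps [H1 H2 ->]]]].
  exists 0%N, 0%N, (sig r), (sig 1); split=> //.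
  - by left; split=> //; exists r.
  - by left; split=> //; exists 1.
  by left; rewrite -sigM mulr1.
case Hq: (qs != [::]); case Hp: (ps != [::]); rewrite ?Hq ?Hp // in H1.
- exists (size qs), (size ps), (TQ T [:: (1%Z, qs)]), (SP S [:: (1%Z, ps)]); split=> //.
  + right; split; first by rewrite lt0n size_eq0.
    by exists [:: (1%Z, qs)]; split=> // c; rewrite inE => /eqP ->.
  + right; split; first by rewrite lt0n size_eq0.
    by exists [:: (1%Z, ps)]; split=> // c; rewrite inE => /eqP ->.
  by left; rewrite /TQ /SP !big_seq1.
- move/negbFE/eqP: Hp => Hp; subst ps.
  exists (size qs), 0%N, (TQ T [:: (1%Z, qs)]), (sig 1); split=> //.
  + right; split; first by rewrite lt0n size_eq0.
    by exists [:: (1%Z, qs)]; split=> // c; rewrite inE => /eqP ->.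
  + by left; split=> //; exists 1.
  by left; rewrite /TQ !big_seq1 PS0 mulr1 PT_sig1.
- move/negbFE/eqP: Hq => Hq; subst qs.
  exists 0%N, (size ps), (sig 1), (SP S [:: (1%Z, ps)]); split=> //.
  + by left; split=> //; exists 1.
  + right; split; first by rewrite lt0n size_eq0.
    by exists [:: (1%Z, ps)]; split=> // c; rewrite inE => /eqP ->.
  by left; rewrite /SP !big_seq1 PT0 mul1r sig1_PS.
Qed.

Lemma TQ_span m u : (0 < m)%N -> deg m u -> span (NF m) (TQ T u).
Proof.
move=> Hm Hu; apply: spanB_sum => c Hc; apply: spanB_gen.
apply: (NF_of (qs := c.2) (ps := [::])).
- by rewrite -size_eq0 (Hu c Hc); case: (m) Hm.
- by rewrite (Hu c Hc) /= subr0.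
by rewrite PS0 mulr1.
Qed.

Lemma SP_span n u : (0 < n)%N -> deg n u -> span (NF (- n%:Z)) (SP S u).
Proof.
move=> Hm Hu; apply: spanB_sum => c Hc; apply: spanB_gen.
apply: (NF_of (qs := [::]) (ps := c.2)).
- by rewrite /= -size_eq0 (Hu c Hc); case: (n) Hm.
- by rewrite (Hu c Hc) /= sub0r.
by rewrite PT0 mul1r.
Qed.

Lemma span_NFmul a b c x y : c = a + b -> span (NF a) x -> span (NF b) y -> span (NF c) (x * y).
Proof.
move=> -> Hx Hy; apply: (spanB_mul _ Hx Hy) => g h Hg Hh.
by apply: spanB_gen; apply: NFmul.
Qed.

Lemma imQ_span m c : imQ sig T m c -> span (NF m) c.
Proof.
case=> [[-> [r ->]]|[Hm [u [Hu ->]]]]; last exact: TQ_span.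
by apply: spanB_gen; apply: NF_sig.
Qed.

Lemma imP_span n d : imP sig S n d -> span (NF (- n%:Z)) d.
Proof.
case=> [[-> [r ->]]|[Hm [u [Hu ->]]]]; last exact: SP_span.
by apply: spanB_gen; rewrite oppr0; apply: NF_sig.
Qed.

Lemma gen_NF a b : gen sig S T a b -> span (NF a) b.
Proof.
move=> [m [n [c [d [Ha Hc Hd Hb]]]]].
case: Hb => [->|[r ->]].
  by apply: (span_NFmul _ (imQ_span Hc) (imP_span Hd)); rewrite -Ha.
apply: (span_NFmul _ _ (imP_span Hd)); first by rewrite -Ha.
apply: (span_NFmul (a := 0) _ _ (imQ_span Hc)); first by rewrite add0r.
by apply: spanB_gen; apply: NF_sig.
Qed.

Lemma inT_iff a x : inT sig S T a x <-> span (NF a) x.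
Proof.
split; first by apply: spanB_span => g; apply: gen_NF.
by apply: spanB_span => g Hg; apply: spanB_gen; apply: NF_gen.
Qed.

Lemma inT_mul a b s t : inT sig S T a s -> inT sig S T b t -> inT sig S T (a + b) (s * t).
Proof. by move=> /inT_iff Hs /inT_iff Ht; apply/inT_iff; apply: span_NFmul Hs Ht. Qed.

Lemma B1 ps xs : size ps = size xs -> ps != [::] -> PS ps * PT xs = sig (psi_n psi ps xs).
Proof.
elim: ps xs => [//|p ps IH] xs Hs _.
case/lastP: xs Hs => [//|xs x]; rewrite size_rcons => -[Hs].
case: ps IH Hs => [|p' ps'] IH Hs.
  case: xs Hs => // _.
  by rewrite /psi_n /PS /PT /= !big_seq1 Spsi.
rewrite psi_n_step -?size_eq0 -?Hs //.
rewrite Spsi Sr -(IH xs) //.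
by rewrite /PS /PT big_cons big_rcons /= !mulrA.
Qed.

Lemma PT_multibal n : multibal n PT.
Proof.
split.
  move=> xs j a b Hs Hj; rewrite !set_nthE Hs Hj.
  by rewrite !PT_cat /PT !big_cons TD mulrDl mulrDr.
move=> xs j r Hs Hj; rewrite !set_nthE Hs Hj (ltnW Hj).
rewrite (@drop_nth _ 0 j.+1 xs) ?Hs // (@take_nth _ 0 j xs) ?Hs ?(ltnW Hj) //.
rewrite -cats1 !PT_cat /PT !big_cons !big_nil Tr Tl.
by rewrite !mulr1 !mulrA.
Qed.

Lemma SP_PT n u xs : (0 < n)%N -> deg n u -> size xs = n ->
  SP S u * PT xs = sig (psiF psi u [:: (1%Z, xs)]).
Proof.
move=> Hn Hu Hs; rewrite /psiF.
under eq_bigr => a _ do rewrite big_seq1 /= mulr1.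
rewrite (addf_lin sigD) /SP mulr_suml; apply: eq_big_seq => a Ha.
rewrite mulrzAl B1 // ?(Hu a Ha) // -size_eq0 (Hu a Ha).
by case: (n) Hn.
Qed.

Lemma TQ_sig n u r : (0 < n)%N -> deg n u ->
  TQ T u * sig r = \sum_(c <- u) PT (ract_seq c.2 r) *~ c.1.
Proof.
move=> Hn Hu; rewrite /TQ mulr_suml; apply: eq_big_seq => c Hc.
rewrite mulrzAl PT_ract // -size_eq0 (Hu c Hc).
by case: (n) Hn.
Qed.

Lemma L1 i fam xs : (0 < i)%N ->
  (forall k, k \in fam -> deg i k.1.2 /\ deg i k.2) ->
  (forall x, deg i x -> teq i (famF psi fam x) x) -> size xs = i ->
  (\sum_(k <- fam) (TQ T k.1.2 * SP S k.2) *~ k.1.1) * PT xs = PT xs.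
Proof.
move=> Hi Hd Ht Hs.
have Hx : deg i [:: (1%Z, xs)] by move=> c; rewrite inE => /eqP ->.
have := Ht _ Hx _ PT (PT_multibal i).
rewrite /fsum big_seq1 /= mulr1z => Hfs; rewrite -[in RHS]Hfs.
rewrite /famF big_flatten /= big_map mulr_suml.
apply: eq_big_seq => k Hk.
have [Hq Hp] := Hd k Hk.
rewrite big_map /thetaF big_map /=.
rewrite mulrzAl -mulrA (SP_PT Hi Hp Hs) (TQ_sig _ Hi Hq) mulrz_suml.
by apply: eq_bigr => c _; rewrite mulrzA_C.
Qed.

Variable l' : seq (int * P * Q).
Hypothesis Hl' : forall y : P, \sum_(k <- l') bm_l (psi y k.2) k.1.2 *~ k.1.1 = y.

Fixpoint EL (i : nat) : seq (int * seq Q * seq P) :=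
  match i with
  | 0 => [:: (1%Z, [::], [::])]
  | i'.+1 => [seq (k.1.1 * t.1.1, k.2 :: t.1.2, rcons t.2 k.1.2) | k <- l', t <- EL i']
  end.

Definition Ev i := \sum_(t <- EL i) (PT t.1.2 * PS t.2) *~ t.1.1.

Lemma EL_size i t : t \in EL i -> size t.1.2 = i /\ size t.2 = i.
Proof.
elim: i t => [|i IH] t /=; first by rewrite inE => /eqP ->.
case/allpairsP => [[k t'] [_ /= /IH [H1 H2] ->]] /=.
by rewrite size_rcons H1 H2.
Qed.

Lemma S_id y : S y = \sum_(k <- l') (sig (psi y k.2) * S k.1.2) *~ k.1.1.
Proof. by rewrite -{1}(Hl' y) (addf_lin SD); apply: eq_bigr => k _; rewrite Sl. Qed.

Lemma Ev0 : Ev 0 = 1.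
Proof. by rewrite /Ev big_seq1 /= PT0 PS0 mulr1 mulr1z. Qed.

Lemma Ev_id i ps : size ps = i -> PS ps * Ev i = PS ps.
Proof.
elim: i ps => [|i IH] ps Hs.
  by case: ps Hs => // _; rewrite Ev0 mulr1.
case/lastP: ps Hs => [//|ps0 z]; rewrite size_rcons => -[Hs].
have key : forall r, PS ps0 * sig r * Ev i = PS ps0 * sig r.
  move=> r; case Hp: (ps0 != [::]).
    by rewrite -PS_ract // IH // size_ract.
  move/negbFE/eqP: Hp => Hp; subst ps0; move: Hs => /= <-.
  by rewrite Ev0 mulr1.
rewrite /Ev big_allpairs_dep /= mulr_sumr.
transitivity (\sum_(k <- l') (PS ps0 * sig (psi z k.2) * Ev i * S k.1.2) *~ k.1.1).
  apply: eq_bigr => k _; rewrite /Ev !mulr_sumr mulr_suml mulrz_suml.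
  apply: eq_bigr => t _.
  rewrite !mulrzAr !mulrzAl -mulrzA_C; congr (_ *~ _ *~ _).
  by rewrite /PS /PT !big_rcons big_cons /= Spsi !mulrA.
under eq_bigr do rewrite key.
rewrite {2}/PS big_rcons /= -/(PS ps0) (S_id z) mulr_sumr.
by apply: eq_bigr => k _; rewrite mulrzAr mulrA.
Qed.

Lemma L2 i fam ps : (0 < i)%N ->
  (forall k, k \in fam -> deg i k.1.2 /\ deg i k.2) ->
  (forall x, deg i x -> teq i (famF psi fam x) x) -> size ps = i ->
  PS ps * (\sum_(k <- fam) (TQ T k.1.2 * SP S k.2) *~ k.1.1) = PS ps.
Proof.
move=> Hi Hd Ht Hs.
set E := \sum_(k <- fam) _.
have h1 : E * Ev i = Ev i.
  rewrite /Ev mulr_sumr; apply: eq_big_seq => t Ht'.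
  by rewrite mulrzAr mulrA /E (L1 Hi Hd Ht (EL_size Ht').1).
have h2 : E * Ev i = E.
  rewrite /E mulr_suml; apply: eq_big_seq => k Hk.
  rewrite mulrzAl -mulrA; congr (_ * _ *~ _).
  rewrite /SP mulr_suml; apply: eq_big_seq => a Ha.
  by rewrite mulrzAl Ev_id // (proj2 (Hd k Hk) a Ha).
by rewrite -h2 h1 Ev_id.
Qed.

Lemma eps_left i e : is_eps psi sig S T i e -> forall s, inT sig S T i%:Z s -> e * s = s.
Proof.
move=> He s /inT_iff Hs; apply: (spanB_lid _ Hs) => g.
case: i He Hs => [|i] /= He Hs.
  subst e; case=> [[_ [r ->]]|[qs [ps [H1 H2 ->]]]]; first by rewrite -sigM mul1r.
  case Hq: (qs != [::]); first by rewrite mulrA sig1_PT.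
  move/negbFE/eqP: Hq => Hq; subst qs; rewrite /= in H1.
  by rewrite PT0 mul1r sig1_PS.
case: He => fam [Hd Ht ->].
case=> [[Hi _]|[qs [ps [H1 H2 ->]]]]; first by case: Hi.
have Hle : (i.+1 <= size qs)%N by lia.
by rewrite -(cat_take_drop i.+1 qs) PT_cat !mulrA (L1 (ltn0Sn i) Hd Ht (size_takel Hle)).
Qed.

Lemma eps_right i e : is_eps psi sig S T i e -> forall t, inT sig S T (- i%:Z) t -> t * e = t.
Proof.
move=> He s /inT_iff Hs; apply: (spanB_rid _ Hs) => g.
case: i He Hs => [|i] /= He Hs.
  subst e; case=> [[_ [r ->]]|[qs [ps [H1 H2 ->]]]]; first by rewrite -sigM mulr1.
  case Hp: (ps != [::]); first by rewrite -mulrA PS_sig1.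
  move/negbFE/eqP: Hp => Hp; subst ps; rewrite /= orbF in H1.
  by rewrite PS0 mulr1 PT_sig1.
case: He => fam [Hd Ht ->].
case=> [[Hi _]|[qs [ps [H1 H2 ->]]]]; first by move/eqP: Hi; rewrite oppr_eq0.
have Hle : (i.+1 <= size ps)%N by lia.
set k := (size ps - i.+1)%N.
have Hk : size (drop k ps) = i.+1 by rewrite size_drop /k; lia.
by rewrite -(cat_take_drop k ps) PS_cat -!mulrA (L2 (ltn0Sn i) Hd Ht Hk).
Qed.

Lemma eps_parts i e : is_eps psi sig S T i e ->
      (forall s, inT sig S T i%:Z s -> e * s = s) /\
      (forall t, inT sig S T (- i%:Z) t -> t * e = t) /\
      [/\ prodT sig S T i%:Z e,
          forall x, prodT sig S T i%:Z x -> inT sig S T 0 x,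
          forall x y, prodT sig S T i%:Z x -> prodT sig S T i%:Z y ->
                      prodT sig S T i%:Z (x - y),
          forall a x, inT sig S T 0 a -> prodT sig S T i%:Z x ->
                      prodT sig S T i%:Z (a * x) /\ prodT sig S T i%:Z (x * a) &
          forall x, prodT sig S T i%:Z x -> e * x = x /\ x * e = x].
Proof.
move=> He.
have HL := eps_left He; have HR := eps_right He.
split=> //; split=> //; split.
- case: i He {HL HR} => [|i] /= He.
    subst e; apply: spanB_gen; exists (sig 1), (sig 1); split.
    + by apply/inT_iff; apply: spanB_gen; apply: NF_sig.
    + by apply/inT_iff; apply: spanB_gen; rewrite oppr0; apply: NF_sig.
    by rewrite -sigM mulr1.
  case: He => fam [Hd Ht ->].
  apply: spanB_sum => k Hk; apply: spanB_gen.
  have [Hq Hp] := Hd k Hk.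
  exists (TQ T k.1.2), (SP S k.2); split=> //; apply/inT_iff.
  + exact: TQ_span.
  + exact: SP_span.
- move=> x Hx; apply/inT_iff; apply: (spanB_span _ Hx) => g [s [t [Hs Ht ->]]].
  by apply/inT_iff; rewrite -(addrN i%:Z); apply: inT_mul.
- by move=> x y; apply: spanB_sub.
- move=> a x Ha Hx; split.
    apply: (spanB_mul (G1 := fun g => g = a) _ (spanB_gen _) Hx) => // g h -> [s [t [Hs Ht ->]]].
    apply: spanB_gen; exists (a * s), t; split=> //; last by rewrite mulrA.
    by rewrite -(add0r i%:Z); apply: inT_mul.
  apply: (spanB_mul (G2 := fun g => g = a) _ Hx (spanB_gen _)) => // g h [s [t [Hs Ht ->]]] ->.
  apply: spanB_gen; exists s, (t * a); split=> //; last by rewrite mulrA.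
  by rewrite -(addr0 (- i%:Z)); apply: inT_mul.
move=> x Hx; split.
  by apply: (spanB_lid _ Hx) => g [s [t [Hs Ht ->]]]; rewrite mulrA HL.
by apply: (spanB_rid _ Hx) => g [s [t [Hs Ht ->]]]; rewrite -mulrA HR.
Qed.

End Rep.

Unset Implicit Arguments.

Theorem mainTheorem10 (R : pzRingType) (P Q : bimod R) (psi : P -> Q -> R)
  (B : pzRingType) (sig : R -> B) (S : P -> B) (T : Q -> B) :
  unital_bimod P -> unital_bimod Q -> is_system psi -> FS' psi ->
  toeplitz psi sig S T ->
  forall i : nat,
    (exists e, is_eps psi sig S T i e) /\
    (forall e, is_eps psi sig S T i e ->
      (forall s, inT sig S T i%:Z s -> e * s = s) /\
      (forall t, inT sig S T (- i%:Z) t -> t * e = t) /\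
      [/\ prodT sig S T i%:Z e,
          forall x, prodT sig S T i%:Z x -> inT sig S T 0 x,
          forall x y, prodT sig S T i%:Z x -> prodT sig S T i%:Z y ->
                      prodT sig S T i%:Z (x - y),
          forall a x, inT sig S T 0 a -> prodT sig S T i%:Z x ->
                      prodT sig S T i%:Z (a * x) /\ prodT sig S T i%:Z (x * a) &
          forall x, prodT sig S T i%:Z x -> e * x = x /\ x * e = x]).
Proof.
move=> HP HQ Hsys [[l Hl] [l' Hl']] [Hcov _] i.
split.
  case: i => [|i]; first by exists (sig 1).
  exists (\sum_(k <- famL l i) (TQ T k.1.2 * SP S k.2) *~ k.1.1).
  exists (famL l i); split=> //.
  - move=> k /mapP [t Ht ->] /=; have [H1 H2] := Lq_size Ht.
    by split=> c; rewrite inE => /eqP ->.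
  - by move=> x Hx; apply: (fam_teq Hsys Hl Hx).
move=> e He; exact: (eps_parts Hcov HP HQ Hl' He).
Qed.
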